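(* If $n\ge2$, then $$b_n(y;-t,t,t)=(-1)^n2^{n-2}t^{n-1}(y-1)y.$$ In particular, for $n\ge2$ the statistic on $I_n$ recording the number of levels is balanced, i.e. the number of members of $I_n$ with an even number of levels equals the number with an odd number of levels.
   Context: An inversion sequence of length $n$ is a sequence $\rho=\rho_1\cdots\rho_n$ of integers with $1\le \rho_i\le i$ for all $i$; $I_n$ is the set of them and $I_{n,i}$ those with last letter $i$. A level, descent, or ascent of $\rho$ is an index $i\in[n-1]$ with $\rho_i=\rho_{i+1}$, $\rho_i>\rho_{i+1}$, or $\rho_i<\rho_{i+1}$, respectively. Define $b_n(y;p,q,r)=\sum_{i=1}^n y^i\sum_{\rho\in I_{n,i}}p^{\mathrm{lev}(\rho)}q^{\mathrm{des}(\rho)}r^{\mathrm{asc}(\rho)}$. *)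

(* Defs.v *)
From mathcomp Require Import all_boot all_order all_algebra.
Set Implicit Arguments. Unset Strict Implicit. Unset Printing Implicit Defensive.
Import GRing.Theory.

(* A word rho = rho_1 ... rho_n is represented by the list s = [rho_1; ...; rho_n];
   rho_{j+1} is [nth 0 s j] (0-based list position j). *)

Definition is_invseq (s : seq nat) : bool :=
  all (fun j => (0 < nth 0 s j) && (nth 0 s j <= j.+1)) (iota 0 (size s)).

Definition lev (s : seq nat) : nat :=
  count (fun j => nth 0 s j == nth 0 s j.+1) (iota 0 (size s).-1).
Definition des (s : seq nat) : nat :=
  count (fun j => nth 0 s j.+1 < nth 0 s j) (iota 0 (size s).-1).
Definition asc (s : seq nat) : nat :=
  count (fun j => nth 0 s j < nth 0 s j.+1) (iota 0 (size s).-1).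

(* Candidate words of length n with letters in {0,...,n}: a finite type
   containing all of I_n; I_n is cut out by [is_invseq]. *)
Definition word (n : nat) (t : n.-tuple 'I_n.+1) : seq nat := map val t.

Definition in_Ini (n i : nat) (t : n.-tuple 'I_n.+1) : bool :=
  is_invseq (word t) && (last 0 (word t) == i).

Definition b (R : comPzRingType) (n : nat) (y p q r : R) : R :=
  \sum_(1 <= i < n.+1)
     (y ^+ i * \sum_(t : n.-tuple 'I_n.+1 | in_Ini i t)
                  (p ^+ lev (word t) * q ^+ des (word t) * r ^+ asc (word t)))%R.

(* Main.v *)
Require Import Defs.
From mathcomp Require Import all_boot all_order all_algebra.
Import GRing.Theory.
From mathcomp Require Import zify ring.


Lemma count_iotaS (a : pred nat) m k :
  count a (iota m.+1 k) = count (fun j => a j.+1) (iota m k).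
Proof. by elim: k m => //= k IH m; rewrite IH. Qed.

Lemma lev_cons2 x y s : lev [:: x, y & s] = (x == y) + lev (y :: s).
Proof. by rewrite /lev /= count_iotaS. Qed.

Lemma lev_rcons s j : s != [::] -> lev (rcons s j) = lev s + (last 0 s == j).
Proof.
elim: s => // x [|y s] IH _; first by rewrite /lev /= addn0.
by rewrite rcons_cons lev_cons2 /= IH // lev_cons2 addnA.
Qed.

Lemma count3 (f g : nat -> nat) l :
  count (fun j => f j == g j) l + count (fun j => g j < f j) l
  + count (fun j => f j < g j) l = size l.
Proof.
elim: l => //= a l IH; rewrite -IH.
case: (ltngtP (f a) (g a)) => _ /=; rewrite ?add0n ?add1n; lia.
Qed.

Lemma sum3 s : lev s + des s + asc s = (size s).-1.
Proof.
rewrite /lev /des /asc.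
have := count3 (fun j => nth 0 s j) (fun j => nth 0 s j.+1) (iota 0 (size s).-1).
by rewrite size_iota.
Qed.

Lemma is_invseq_rcons s j :
  is_invseq (rcons s j) = is_invseq s && (0 < j <= (size s).+1).
Proof.
rewrite /is_invseq size_rcons -[(size s).+1]addn1 iotaD /= add0n all_cat /= andbT.
rewrite nth_rcons ltnn eqxx; congr (_ && _).
apply: eq_in_all => k; rewrite mem_iota add0n => /andP[_ hk].
  by rewrite !nth_rcons hk.
by rewrite addn1.
Qed.

Fixpoint invs n : seq (seq nat) :=
  if n is m.+1 then [seq rcons s j | s <- invs m, j <- iota 1 m.+1] else [:: [::]].
Lemma invsS n : invs n.+1 = [seq rcons s j | s <- invs n, j <- iota 1 n.+1].
Proof. by []. Qed.
Arguments invs : simpl never.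

Lemma mem_invs n s : (s \in invs n) = is_invseq s && (size s == n).
Proof.
elim: n s => [|n IH] s.
  case: s => [|x s]; rewrite ?andbF //=.
rewrite invsS; apply/allpairsP/idP.
  move=> [[s' j] [Hs Hj ->]]; move: Hs Hj; rewrite IH mem_iota /= => /andP[Hi /eqP Hz] Hj.
  rewrite is_invseq_rcons Hi size_rcons Hz eqxx /= andbT.
  lia.
case/lastP: s => [|s x]; first by case/andP.
rewrite is_invseq_rcons size_rcons eqSS => /andP[/andP[Hi Hx] Hz].
exists (s, x); split => //.
  by rewrite IH Hi Hz.
rewrite mem_iota /=; move/eqP: Hz Hx => ->.
by rewrite add1n ltnS.
Qed.

Lemma uniq_invs n : uniq (invs n).
Proof.
elim: n => // n IH; rewrite invsS.
apply: allpairs_uniq => //; first exact: iota_uniq.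
move=> [s j] [s' j'] _ _ /= H.
have := congr1 (last 0) H; rewrite !last_rcons => Ej; subst j'.
by move/rcons_inj: H => [->].
Qed.

Local Open Scope ring_scope.

Lemma word_inj n : injective (@word n).
Proof.
move=> t1 t2 /= H; apply: val_inj; apply: (inj_map val_inj); exact: H.
Qed.

Lemma sum_tuple (R : comPzRingType) n (P : pred (seq nat)) (G : seq nat -> R) :
  \sum_(t : n.-tuple 'I_n.+1 | is_invseq (word t) && P (word t)) G (word t)
  = \sum_(s <- invs n | P s) G s.
Proof.
rewrite -big_filter -(big_map (@word n) xpredT G) -[RHS]big_filter.
apply: perm_big; apply: uniq_perm.
- rewrite (map_inj_uniq (@word_inj n)); apply: filter_uniq; exact: index_enum_uniq.
- apply: filter_uniq; exact: uniq_invs.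
move=> s; rewrite mem_filter mem_invs; apply/mapP/idP.
  move=> [t]; rewrite mem_filter => /andP[/andP[H1 H2] _] ->.
  by rewrite H1 H2 /word size_map size_tuple eqxx.
move=> /andP[HP /andP[Hi /eqP Hz]].
have Hsz : size (map (@inord n) s) == n by rewrite size_map Hz.
exists (Tuple Hsz); last first.
  rewrite /word /= -map_comp; apply/esym/map_id_in => x /(nthP 0) [j Hj <-] /=.
  apply: inordK; move/allP: Hi => /(_ j); rewrite mem_iota add0n Hj => /(_ isT).
  by case/andP => _ h; rewrite ltnS -Hz (leq_trans h).
rewrite mem_filter mem_index_enum andbT.
have -> : word (Tuple Hsz) = s.
  rewrite /word /= -map_comp; apply/map_id_in => x /(nthP 0) [j Hj <-] /=.
  apply: inordK; move/allP: Hi => /(_ j); rewrite mem_iota add0n Hj => /(_ isT).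
  by case/andP => _ h; rewrite ltnS -Hz (leq_trans h).
by rewrite Hi HP.
Qed.

Section Rec.
Variable R : comPzRingType.

Definition Fv n i : R := \sum_(s <- invs n) (last 0%N s == i)%:R * (-1) ^+ lev s.
Definition Sv n : R := \sum_(s <- invs n) (-1) ^+ lev s.

Lemma sum_pick (l : seq nat) i (x : nat -> R) :
  \sum_(j <- l) (j == i)%:R * x j = (count_mem i l)%:R * x i.
Proof.
elim: l => [|a l IH]; first by rewrite big_nil mul0r.
rewrite big_cons IH /= natrD mulrDl; congr (_ + _).
by case: eqP => [->|_]; rewrite ?mul0r ?mul1r // eq_sym; case: eqP.
Qed.

Lemma sum_sign (l : seq nat) a :
  \sum_(j <- l) (-1) ^+ (a == j) = (size l)%:R - 2 * (count_mem a l)%:R :> R.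
Proof.
elim: l => [|b l IH]; first by rewrite big_nil /=; ring.
rewrite big_cons IH /= eq_sym; case: (b == a) => /=; rewrite ?natrD; ring.
Qed.

Lemma invs_ne n s : (0 < n)%N -> s \in invs n -> s != [::].
Proof. rewrite mem_invs => Hn /andP[_ /eqP Hz]; case: s Hz => // Hz; by subst n. Qed.

Arguments invs_ne {n s}.
Lemma invs_last n s : (0 < n)%N -> s \in invs n -> (0 < last 0%N s <= n)%N.
Proof.
move=> Hn Hs; have := invs_ne Hn Hs; move: Hs; rewrite mem_invs.
case/lastP: s => // s x /andP[+ /eqP Hz] _; rewrite is_invseq_rcons last_rcons.
by case/andP => _; rewrite -Hz size_rcons.
Qed.

Arguments invs_last {n s}.
Lemma Fv_rec n i : (0 < n)%N ->
  Fv n.+1 i = (0 < i <= n.+1)%N%:R * (Sv n - 2 * Fv n i).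
Proof.
move=> Hn; rewrite /Fv invsS big_allpairs_dep /Sv mulr_sumr -sumrB mulr_sumr.
apply: eq_big_seq => s Hs.
under eq_bigr => j _ do rewrite last_rcons lev_rcons ?(invs_ne Hn Hs) // exprD.
rewrite sum_pick count_uniq_mem ?iota_uniq // mem_iota add1n ltnS.
by case: (last 0%N s == i) => /=; ring.
Qed.

Lemma Sv_rec n : (0 < n)%N -> Sv n.+1 = ((n.+1)%:R - 2) * Sv n.
Proof.
move=> Hn; rewrite /Sv invsS big_allpairs_dep mulr_sumr.
apply: eq_big_seq => s Hs.
under eq_bigr => j _ do rewrite lev_rcons ?(invs_ne Hn Hs) // exprD.
rewrite -mulr_sumr sum_sign size_iota count_uniq_mem ?iota_uniq //.
rewrite mem_iota add1n ltnS.
have /andP[-> H2] := invs_last Hn Hs; rewrite (leq_trans H2) //.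
rewrite /=; ring.
Qed.

Definition Xf i : R := (i == 2%N)%:R - (i == 1%N)%:R.

Lemma main_rec n : (2 <= n)%N ->
  Sv n = 0 /\ forall i, Fv n i = (-1) ^+ n * 2 ^+ (n - 2) * Xf i.
Proof.
elim: n => // n IH; rewrite ltnS leq_eqVlt => /orP[/eqP <-|Hn].
  have E : invs 2 = [:: [:: 1; 1]; [:: 1; 2]]%N by [].
  rewrite /Sv /Fv E !big_cons !big_nil.
  have -> : lev [:: 1; 1]%N = 1%N by [].
  have -> : lev [:: 1; 2]%N = 0%N by [].
  split; first by ring.
  by move=> [|[|[|i]]]; rewrite /Xf !big_cons big_nil /=; ring.
have [IS IF] := IH Hn; have Hn0 : (0 < n)%N by apply: leq_trans Hn.
split; first by rewrite Sv_rec // IS mulr0.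
move=> i; rewrite Fv_rec // IS IF.
have -> : (n.+1 - 2 = (n - 2).+1)%N by rewrite subSn.
case H: (0 < i <= n.+1)%N.
  rewrite exprS exprS /=; ring.
have -> : Xf i = 0.
  rewrite /Xf; case: i H => [|[|[|i]]] //= H; rewrite ?subrr //.
  by move: H; rewrite ltnS (ltnW Hn).
by rewrite !mulr0 subr0 mulr0.
Qed.
End Rec.

Lemma inner_sum (R : comPzRingType) n i (t : R) :
  (\sum_(t0 : n.-tuple 'I_n.+1 | in_Ini i t0)
     ((- t) ^+ lev (word t0) * t ^+ des (word t0) * t ^+ asc (word t0))
  = t ^+ n.-1 * Fv R n i)%R.
Proof.
rewrite (sum_tuple R n (fun s => last 0 s == i)
   (fun s => (- t) ^+ lev s * t ^+ des s * t ^+ asc s)%R).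
rewrite big_mkcond /Fv mulr_sumr; apply: eq_big_seq => s.
rewrite mem_invs => /andP[_ /eqP Hz].
have E : ((- t) ^+ lev s * t ^+ des s * t ^+ asc s = (-1) ^+ lev s * t ^+ n.-1)%R.
  by rewrite -Hz -sum3 [((- t) ^+ _)%R]exprNn !exprD; ring.
by rewrite E; case: (last 0 s == i) => /=; ring.
Qed.

Local Close Scope ring_scope.
Import Num.Theory.

Theorem proposition3p8 (n : nat) : (2 <= n)%N ->
  (forall (R : comPzRingType) (y t : R),
     b n y (- t) t t = ((-1) ^+ n * 2 ^+ (n - 2) * t ^+ n.-1 * (y - 1) * y)%R)
  /\
  #|[pred s : n.-tuple 'I_n.+1 | is_invseq (word s) && ~~ odd (lev (word s))]|
  = #|[pred s : n.-tuple 'I_n.+1 | is_invseq (word s) && odd (lev (word s))]|.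
Proof.
move=> Hn; split.
  move=> R y t; rewrite /b.
  under eq_bigr => i _ do rewrite inner_sum (proj2 (main_rec R n Hn)).
  rewrite big_ltn; last by rewrite ltnS (ltnW Hn).
  rewrite big_ltn; last by rewrite ltnS.
  rewrite big_nat_cond big1; last first.
    move=> i /andP[/andP[Hi _] _]; rewrite /Xf.
    by case: i Hi => [|[|[|i]]] //= _; ring.
  rewrite /Xf /=; ring.
have HS := proj1 (main_rec int n Hn).
have := sum_tuple int n xpredT (fun s => (-1) ^+ lev s)%R.
have HS' : (\sum_(s <- invs n | xpredT s) (-1) ^+ lev s = 0 :> int)%R by exact: HS.
rewrite HS' (bigID (fun t => odd (lev (word t)))) /=.
set A := (X in (X + _)%R); set B := (X in (_ + X)%R).
have -> : A = (- (#|[pred s : n.-tuple 'I_n.+1 | is_invseq (word s) && odd (lev (word s))]|%:R))%R.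
  rewrite /A -sum1_card natr_sum -sumrN; apply: eq_big => t.
    by rewrite !inE andbT.
  by move=> /andP[_ H]; rewrite -signr_odd H.
have -> : B = (#|[pred s : n.-tuple 'I_n.+1 | is_invseq (word s) && ~~ odd (lev (word s))]|%:R)%R.
  rewrite /B -sum1_card natr_sum; apply: eq_big => t.
    by rewrite !inE andbT.
  by move=> /andP[_ H]; rewrite -signr_odd (negbTE H).
move/eqP; rewrite addrC subr_eq0 eqr_nat => /eqP.
by [].
Qed.
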